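(* Let $u:2^{[n]} \rightarrow \mathbb{R}_{\geq 0}$ be a (monotone, normalized) submodular and second-order supermodular set function and let $c:2^{[n]} \rightarrow \mathbb{R}_{\geq 0}$ be a modular set function with positive item costs. If the local search algorithm converges before terminating, i.e., it reaches a permutation $\pi$ such that no neighbor of $\pi$ (a permutation obtained by removing the element in some position $i$ of $\pi$ and reinserting it in some position $j$) has strictly smaller objective value, then the permutation it returns is a $4$-approximation to Min-Sum Submodular Cover on $u$ and $c$.
   Context: Min-Sum Submodular Cover: given a positive integer $n$, a monotone submodular utility function $u:2^{[n]} \rightarrow \mathbb{R}_{\geq 0}$ with $u(\emptyset)=0$, and positive costs $c_1,\ldots,c_n$ defining the modular cost function $c(S)=\sum_{i\in S} c_i$, find a permutation of $[n]$ minimizing $\sum_{i=1}^{n} c(S_i)\,(u(S_i)-u(S_{i-1}))$, where $S_i$ is the set of the first $i$ elements of the permutation (and $S_0=\emptyset$). Notation: $f(e|S) := f(S\cup\{e\})-f(S)$. The function $u$ is submodular if $u(i|S) \geq u(i|S\cup\{j\})$, and second-order supermodular if $u(i|S) - u(i|S \cup \{j\}) \geq u(i|S \cup \{k\}) - u(i|S \cup \{k,j\})$, for all $S\subseteq[n]$ and $i,j,k \in [n]\setminus S$. The local search algorithm: given $\epsilon>0$ and an initial $d$-approximate permutation $\pi$, repeat for up to $2n^3\log(d/\epsilon)$ iterations: among all neighbors $\pi'$ of $\pi$ (obtained by moving the element in position $i$ to position $j$, for $i,j\in[n]$), find one with lowest objective value; if its objective value is strictly less than that of $\pi$, replace $\pi$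 by it; otherwise the algorithm has converged and returns $\pi$. If the iteration budget is exhausted, it returns the current $\pi$. *)

(* Defs.v *)
From HB Require Import structures.
From mathcomp Require Import all_boot all_order all_algebra.
Set Implicit Arguments. Unset Strict Implicit. Unset Printing Implicit Defensive.
Import Order.TTheory GRing.Theory Num.Theory.
Local Open Scope ring_scope.

Section MSSC.
Variables (R : realFieldType) (n : nat).

Definition marg (f : {set 'I_n} -> R) (e : 'I_n) (S : {set 'I_n}) : R :=
  f (e |: S) - f S.

Definition normalized (u : {set 'I_n} -> R) : Prop := u set0 = 0.

Definition nonneg_fun (u : {set 'I_n} -> R) : Prop := forall S, 0 <= u S.

Definition monotone (u : {set 'I_n} -> R) : Prop :=
  forall S T : {set 'I_n}, S \subset T -> u S <= u T.

Definition submodular (u : {set 'I_n} -> R) : Prop :=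
  forall (S : {set 'I_n}) (i j : 'I_n), i \notin S -> j \notin S ->
    marg u i (j |: S) <= marg u i S.

Definition second_order_supermodular (u : {set 'I_n} -> R) : Prop :=
  forall (S : {set 'I_n}) (i j k : 'I_n), i \notin S -> j \notin S -> k \notin S ->
    marg u i (k |: S) - marg u i (k |: (j |: S)) <= marg u i S - marg u i (j |: S).

Definition cost (c : 'I_n -> R) (S : {set 'I_n}) : R := \sum_(i in S) c i.

(* A permutation of [n] is represented as the sequence of its elements in
   order: s is a permutation iff perm_eq s (enum 'I_n). *)
Definition is_perm_seq (s : seq 'I_n) : bool := perm_eq s (enum 'I_n).

Definition prefix (s : seq 'I_n) (k : nat) : {set 'I_n} := [set x in take k s].

Definition mssc_obj (u : {set 'I_n} -> R) (c : 'I_n -> R) (s : seq 'I_n) : R :=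
  \sum_(k < size s) cost c (prefix s k.+1) * (u (prefix s k.+1) - u (prefix s k)).

(* neighbor: remove the element at (0-based) position i, reinsert it so that
   it ends up at (0-based) position j *)
Definition move_elt (i j : nat) (s : seq 'I_n) : seq 'I_n :=
  let t := take i s ++ drop i.+1 s in
  take j t ++ take 1 (drop i s) ++ drop j t.

Definition local_opt (u : {set 'I_n} -> R) (c : 'I_n -> R) (s : seq 'I_n) : Prop :=
  forall i j : 'I_n, ~ (mssc_obj u c (move_elt i j s) < mssc_obj u c s).

End MSSC.

(* Main.v *)
Require Import Defs.
From HB Require Import structures.
From mathcomp Require Import all_boot all_order all_algebra.
From mathcomp Require Import ring lra zify.
Require Import Defs.
Import Order.TTheory GRing.Theory Num.Theory.
Local Open Scope ring_scope.
Set Implicit Arguments. Unset Strict Implicit. Unset Printing Implicit Defensive.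

Lemma marg_ge0 (R : realFieldType) n (u : {set 'I_n} -> R) e (S : {set 'I_n}) :
  monotone u -> 0 <= marg u e S.
Proof. by move=> hm; rewrite /marg subr_ge0; apply: hm; apply: subsetUr. Qed.

Lemma marg_in (R : realFieldType) n (u : {set 'I_n} -> R) e (S : {set 'I_n}) :
  e \in S -> marg u e S = 0.
Proof. by move=> he; rewrite /marg (setUidPr _) ?subrr // sub1set. Qed.

Lemma marg_anti (R : realFieldType) n (u : {set 'I_n} -> R) e (S T : {set 'I_n}) :
  monotone u -> submodular u -> S \subset T -> marg u e T <= marg u e S.
Proof.
move=> hm hs; move Hk: #|T :\: S| => k; elim: k T Hk => [|k IH] T Hk sST.
  have -> : T = S.
    apply/eqP; rewrite eqEsubset sST andbT.
    by rewrite -setD_eq0 -cards_eq0 Hk.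
  by [].
have [eT|eT] := boolP (e \in T).
  by rewrite (marg_in _ eT) marg_ge0.
have : (0 < #|T :\: S|)%N by rewrite Hk.
case/card_gt0P=> j; rewrite inE => /andP [jS jT].
set T' := T :\ j.
have eT' : e \notin T' by rewrite !inE negb_and eT orbT.
have jT' : j \notin T' by rewrite !inE eqxx.
have -> : T = j |: T' by rewrite setD1K.
apply: le_trans (hs T' e j eT' jT') _.
apply: IH.
  have : #|T :\: S| = #|T' :\: S|.+1.
    rewrite (cardsD1 j (T :\: S)) !inE jS jT /=; congr (_.+1).
    by apply: eq_card => x; rewrite !inE; case: (x == j); rewrite ?andbF.
  by rewrite Hk => -[].
apply/subsetP=> x xS; rewrite !inE (subsetP sST) // andbT.
by apply: contraNneq jS => <-.
Qed.

Lemma set_cons n (x : 'I_n) (t : seq 'I_n) :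
  [set y in x :: t] = x |: [set y in t].
Proof. by apply/setP=> y; rewrite !inE. Qed.

Lemma set_cat n (s1 s2 : seq 'I_n) :
  [set y in s1 ++ s2] = [set y in s1] :|: [set y in s2].
Proof. by apply/setP=> y; rewrite !inE mem_cat. Qed.

Lemma sub_sum (R : realFieldType) n (u : {set 'I_n} -> R) (S : {set 'I_n}) t :
  monotone u -> submodular u ->
  u (S :|: [set x in t]) - u S <= \sum_(x <- t) marg u x S.
Proof.
move=> hm hs; elim: t => [|x t IH].
  rewrite big_nil.
  have -> : [set x in [::]] = set0 :> {set 'I_n} by apply/setP=> y; rewrite !inE.
  by rewrite setU0 subrr.
rewrite big_cons set_cons setUCA.
have := marg_anti x hm hs (subsetUl S [set x0 in t]).
rewrite /marg => h.
set A := S :|: _ in h IH *.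
lra.
Qed.

Lemma cost_prefix (R : realFieldType) n (c : 'I_n -> R) (x0 : 'I_n) (s : seq 'I_n) k :
  uniq s -> (k <= size s)%N ->
  cost c (prefix s k) = \sum_(j < k) c (nth x0 s j).
Proof.
move=> us ks; rewrite /cost /prefix.
rewrite (eq_bigl (fun i => i \in take k s)); last by move=> i; rewrite inE.
rewrite -big_uniq; last by rewrite take_uniq.
rewrite (big_nth x0) size_take_min (minn_idPl ks) big_mkord.
by apply: eq_bigr => j _; rewrite nth_take.
Qed.

Lemma abel (R : realFieldType) (a f : nat -> R) N :
  \sum_(k < N) (\sum_(j < k.+1) a j) * (f k.+1 - f k) =
  \sum_(j < N) a j * (f N - f j).
Proof.
elim: N => [|N IH]; first by rewrite !big_ord0.
rewrite big_ord_recr /= IH [in RHS]big_ord_recr /=.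
rewrite [\sum_(j < N.+1) a j]big_ord_recr /= mulrDl addrA; congr (_ + _).
rewrite big_distrl /= -big_split /=; apply: eq_bigr => j _; ring.
Qed.

Lemma obj_pos (R : realFieldType) n (u : {set 'I_n} -> R) (c : 'I_n -> R)
  (x0 : 'I_n) (s : seq 'I_n) :
  uniq s -> [set x in s] = setT ->
  mssc_obj u c s = \sum_(k < size s) c (nth x0 s k) * (u setT - u (prefix s k)).
Proof.
move=> us hs; rewrite /mssc_obj.
rewrite (eq_bigr (fun k : 'I_(size s) => (\sum_(j < k.+1) c (nth x0 s j)) *
   (u (prefix s k.+1) - u (prefix s k)))); last first.
  by move=> k _; rewrite (cost_prefix _ x0).
rewrite (abel (fun j => c (nth x0 s j)) (fun k => u (prefix s k))).
by rewrite /prefix take_size hs.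
Qed.

Fixpoint Fo (R : realFieldType) n (u : {set 'I_n} -> R) (c : 'I_n -> R) (U : R)
  (A : {set 'I_n}) (s : seq 'I_n) : R :=
  match s with
  | [::] => 0
  | x :: s' => c x * (U - u A) + Fo u c U (x |: A) s'
  end.

Lemma Fo_cat (R : realFieldType) n (u : {set 'I_n} -> R) (c : 'I_n -> R) U A s1 s2 :
  Fo u c U A (s1 ++ s2) = Fo u c U A s1 + Fo u c U (A :|: [set x in s1]) s2.
Proof.
elim: s1 A => [|x s1 IH] A /=.
  have -> : [set x in [::]] = set0 :> {set 'I_n} by apply/setP=> y; rewrite !inE.
  by rewrite setU0 add0r.
by rewrite IH addrA set_cons setUCA setUA.
Qed.

Lemma Fo_nth (R : realFieldType) n (u : {set 'I_n} -> R) (c : 'I_n -> R) U (x0 : 'I_n) A s :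
  Fo u c U A s = \sum_(k < size s) c (nth x0 s k) * (U - u (A :|: [set x in take k s])).
Proof.
elim: s A => [|x s IH] A /=; first by rewrite big_ord0.
rewrite big_ord_recl /= IH.
have -> : [set x in [::]] = set0 :> {set 'I_n} by apply/setP=> y; rewrite !inE.
rewrite setU0; congr (_ + _); apply: eq_bigr => k _.
by rewrite /bump /= set_cons setUCA setUA.
Qed.

Lemma perm_facts n (s : seq 'I_n) :
  is_perm_seq s -> [/\ uniq s, size s = n & [set x in s] = setT].
Proof.
rewrite /is_perm_seq => hs; split.
- by rewrite (perm_uniq hs) enum_uniq.
- by rewrite (perm_size hs) size_enum_ord.
- by apply/setP=> x; rewrite inE (perm_mem hs) mem_enum in_setT.
Qed.

Lemma obj_Fo (R : realFieldType) n (u : {set 'I_n} -> R) (c : 'I_n -> R)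
  (x0 : 'I_n) (s : seq 'I_n) :
  uniq s -> [set x in s] = setT ->
  mssc_obj u c s = Fo u c (u setT) set0 s.
Proof.
move=> us hs; rewrite (obj_pos u c x0) // (Fo_nth _ _ _ x0).
by apply: eq_bigr => k _; rewrite set0U.
Qed.

Lemma dropl_cat' (T : Type) (s t : seq T) j :
  (j <= size s)%N -> drop j (s ++ t) = drop j s ++ t.
Proof.
move=> h; rewrite drop_cat; case: ltnP => // h2.
have -> : j = size s by apply/eqP; rewrite eqn_leq h h2.
by rewrite subnn drop0 drop_size.
Qed.

Lemma pre_split n (pi : seq 'I_n) i j k :
  (i <= size pi)%N -> (j <= i)%N -> (k <= i - j)%N ->
  set0 :|: [set x in take j pi] :|: [set x in take k (drop j (take i pi))] =
  prefix pi (j + k).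
Proof.
move=> hi hj hk; rewrite set0U -set_cat /prefix takeD.
rewrite -{1}(subnK hj) -take_drop take_takel //.
Qed.

Lemma local_ineq (R : realFieldType) n (u : {set 'I_n} -> R) (c : 'I_n -> R)
  (x0 : 'I_n) (pi : seq 'I_n) i j :
  is_perm_seq pi -> local_opt u c pi -> (i < n)%N -> (j <= i)%N ->
  \sum_(k < i - j) c (nth x0 pi (j + k)) * marg u (nth x0 pi i) (prefix pi (j + k))
   <= c (nth x0 pi i) * (u (prefix pi i) - u (prefix pi j)).
Proof.
move=> hpi hloc hi hj.
have [upi spi setpi] := perm_facts hpi.
have hi' : (i < size pi)%N by rewrite spi.
set s1 := take j pi; set s2 := drop j (take i pi); set e := nth x0 pi i.
set s3 := drop i.+1 pi.
have Hpi : pi = s1 ++ s2 ++ e :: s3.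
  rewrite /s1 /s2 /e /s3 -(drop_nth x0 hi') catA.
  by rewrite -{1}(take_takel pi hj) cat_take_drop cat_take_drop.
have Hmv : move_elt i j pi = s1 ++ e :: s2 ++ s3.
  rewrite /move_elt (drop_nth x0 hi') /= take0.
  have hsz : size (take i pi) = i by rewrite size_takel // ltnW.
  rewrite takel_cat ?hsz // take_takel // dropl_cat' ?hsz //.
have hperm : perm_eq (move_elt i j pi) pi.
  by rewrite Hmv [X in perm_eq _ X]Hpi perm_cat2l -cat1s perm_catCA.
have hmv : is_perm_seq (move_elt i j pi) by apply: perm_trans hperm hpi.
have [umv _ setmv] := perm_facts hmv.
have hjn : (j < n)%N by apply: leq_ltn_trans hi.
have hle : mssc_obj u c pi <= mssc_obj u c (move_elt i j pi).
  by rewrite leNgt; apply/negP => /(hloc (Ordinal hi) (Ordinal hjn)).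
move: hle; rewrite (obj_Fo u c x0 upi setpi) (obj_Fo u c x0 umv setmv).
rewrite Hmv [X in Fo _ _ _ _ X <= _]Hpi !Fo_cat /=.
rewrite Fo_cat -!setUA.
have hs2 : size s2 = (i - j)%N by rewrite /s2 size_drop size_takel // ltnW.
have hA1 : set0 :|: [set x in s1] = prefix pi j.
  by rewrite set0U.
have hA2 : set0 :|: ([set x in s1] :|: [set x in s2]) = prefix pi i.
  rewrite setUA -{1}(take_size s2) hs2 /s1 /s2.
  by rewrite (pre_split (ltnW hi') hj (leqnn (i-j))) subnKC.
rewrite hA2 hA1 => hle.
set U := u setT.
have key : \sum_(k < i - j) c (nth x0 pi (j + k)) * marg u e (prefix pi (j + k))
   = Fo u c U (prefix pi j) s2 - Fo u c U (e |: prefix pi j) s2.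
  rewrite !(Fo_nth _ _ _ x0) hs2 -sumrB; apply: eq_bigr => k _.
  have hk : (k < i - j)%N by [].
  have hP : prefix pi j :|: [set x in take k s2] = prefix pi (j + k).
    by rewrite -(pre_split (ltnW hi') hj (ltnW hk)) set0U.
  rewrite -setUA hP /s2 nth_drop nth_take; last by rewrite -ltn_subRL.

  rewrite /marg; ring.
rewrite key. lra.
Qed.
Lemma sum_cond0 (R : realFieldType) (F : nat -> R) a b :
  (forall k, (a <= k < b)%N -> F k = 0) -> \sum_(a <= k < b) F k = 0.
Proof. by move=> h; rewrite big_nat big1 // => k /h. Qed.

Lemma sum_widen (R : realFieldType) (g : nat -> R) L N :
  (L <= N)%N -> \sum_(0 <= q < L) g q = \sum_(0 <= q < N) (if (q < L)%N then g q else 0).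
Proof.
move=> hL; rewrite (big_cat_nat (leq0n L) hL) /= [X in _ = _ + X]sum_cond0 ?addr0.
  by apply: eq_big_nat => q /andP [_ ->].
by move=> k /andP [hk _]; rewrite ltnNge hk.
Qed.

Lemma abstract_main (R : realFieldType) (N : nat) (ca cb Rk Rq : nat -> R)
  (x : nat -> nat -> R) (pos : nat -> nat) :
  (forall k, 0 <= ca k) -> (forall q, 0 <= cb q) -> (forall k q, 0 <= x k q) ->
  (forall q, 0 <= Rq q) -> (forall k, 0 <= Rk k) -> Rq N = 0 ->
  (forall k k', (k <= k')%N -> Rk k' <= Rk k) ->
  (forall k L, (k < N)%N -> (L <= N)%N -> 2 * Rq L <= Rk k ->
      Rk k <= 2 * \sum_(0 <= q < L) x k q) ->
  (forall q, (q < N)%N -> (pos q < N)%N) ->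
  (forall q k, (q < N)%N -> (pos q < k)%N -> x k q = 0) ->
  (forall q j, (q < N)%N -> (j <= pos q)%N ->
      \sum_(j <= k < (pos q).+1) ca k * x k q <= cb q * Rk j) ->
  \sum_(0 <= k < N) ca k * Rk k <= 4 * \sum_(0 <= q < N) cb q * Rq q.
Proof.
move=> ca0 cb0 x0 Rq0 Rk0 RqN Rkanti h1 hpos hx0 h4.
have ex k : exists L, 2 * Rq L <= Rk k by exists N; rewrite RqN mulr0 Rk0.
pose len k := ex_minn (ex k).
have lenP k : 2 * Rq (len k) <= Rk k /\ forall L, 2 * Rq L <= Rk k -> (len k <= L)%N.
  by rewrite /len; case: ex_minnP.
have lenN k : (len k <= N)%N by apply: (lenP k).2; rewrite RqN mulr0 Rk0.
have lenmono k k' : (k <= k')%N -> (len k <= len k')%N.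
  move=> hk; apply: (lenP k).2; apply: le_trans (lenP k').1 _; exact: Rkanti.
have lenlt k q : (q < len k)%N -> Rk k < 2 * Rq q.
  move=> hq; rewrite ltNge; apply/negP => /(lenP k).2; lia.
pose F q k := if (q < len k)%N then ca k * x k q else 0.
have stepA : \sum_(0 <= k < N) ca k * Rk k <=
    \sum_(0 <= k < N) 2 * \sum_(0 <= q < N) F q k.
  rewrite !big_mkord; apply: ler_sum => k _.
  have hk : Rk k <= 2 * \sum_(0 <= q < len k) x k q.
    by apply: h1 => //; exact: (lenP k).1.
  apply: le_trans (ler_wpM2l (ca0 k) hk) _.
  rewrite mulrCA (sum_widen _ (lenN k)); apply: ler_wpM2l => //.
  rewrite mulr_sumr; apply: ler_sum => q _; rewrite /F; case: ifP => _; by rewrite ?mulr0.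
have stepC q : (q < N)%N -> \sum_(0 <= k < N) F q k <= 2 * (cb q * Rq q).
  move=> qN; have iN := hpos q qN; move: iN (h4 q) (hx0 q); set i := pos q => iN h4q hx0q.
  have exk : exists k, (i < k)%N || (q < len k)%N by exists i.+1; rewrite ltnSn.
  case: (ex_minnP exk) => kap hkap minkap.
  have kapi : (kap <= i.+1)%N by apply: minkap; rewrite ltnSn.
  have -> : \sum_(0 <= k < N) F q k = \sum_(kap <= k < i.+1) ca k * x k q.
    rewrite (big_cat_nat (leq0n i.+1) iN) /= [X in _ + X]sum_cond0 ?addr0; last first.
      by move=> k /andP [hk _]; rewrite /F (hx0q k qN hk) mulr0; case: ifP.
    rewrite (big_cat_nat (leq0n kap) kapi) /= sum_cond0 ?add0r; last first.
      move=> k /andP [_ hk]; rewrite /F; case: ifP => // hq.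
      have := minkap k; rewrite hq orbT => /(_ isT); lia.
    apply: eq_big_nat => k /andP [hk1 hk2]; rewrite /F.
    have -> : (q < len k)%N = true.
      case/orP: hkap => [hik | hql]; first lia.
      exact: leq_trans hql (lenmono _ _ hk1).
    by [].
  case: (ltnP i kap) => hik.
    rewrite big_geq; last lia.
    by apply: mulr_ge0 => //; apply: mulr_ge0.
  apply: le_trans (h4q kap qN hik) _.
  have hlt : Rk kap < 2 * Rq q.
    by apply: lenlt; case/orP: hkap => //; lia.
  rewrite mulrCA; apply: ler_wpM2l => //; exact: ltW.
apply: le_trans stepA _.
rewrite -mulr_sumr exchange_big /=.
have -> : (4 : R) = 2 * 2 by lra.
rewrite -mulrA; apply: ler_wpM2l => //; rewrite mulr_sumr.
rewrite big_nat_cond [X in _ <= X]big_nat_cond; apply: ler_sum => q /andP [/andP [_ hq] _].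
exact: stepC.
Qed.

Lemma prefix_sub n (s : seq 'I_n) k k' :
  (k <= k')%N -> prefix s k \subset prefix s k'.
Proof.
move=> hk; apply/subsetP => y; rewrite !inE.
by rewrite -(subnKC hk) takeD mem_cat => ->.
Qed.

Theorem theorem1 (R : realFieldType) (n : nat)
  (u : {set 'I_n} -> R) (c : 'I_n -> R)
  (hu0 : normalized u) (hunn : nonneg_fun u) (humon : monotone u)
  (husub : submodular u) (hu2 : second_order_supermodular u)
  (hc : forall i, 0 < c i)
  (pi : seq 'I_n) (hpi : is_perm_seq pi) (hloc : local_opt u c pi) :
  forall sigma : seq 'I_n, is_perm_seq sigma ->
    mssc_obj u c pi <= 4 * mssc_obj u c sigma.
Proof.
move=> sigma hsig.
have [upi spi setpi] := perm_facts hpi.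
have [usg ssg setsg] := perm_facts hsig.
case: (posnP n) => [n0 | npos].
  have sp0 : size pi = 0%N by rewrite spi n0.
  have ss0 : size sigma = 0%N by rewrite ssg n0.
  rewrite (size0nil sp0) (size0nil ss0).
  by rewrite /mssc_obj !big_ord0 mulr0.
pose x0 := Ordinal npos.
rewrite (obj_pos u c x0 upi setpi) (obj_pos u c x0 usg setsg) spi ssg.
have inpi y : y \in pi by have := in_setT y; rewrite -setpi inE.
set U := u setT.
have UP s k : u (prefix s k) <= U by apply: humon; apply: subsetT.
have := @abstract_main R n (fun k => c (nth x0 pi k)) (fun q => c (nth x0 sigma q))
  (fun k => U - u (prefix pi k)) (fun q => U - u (prefix sigma q))
  (fun k q => marg u (nth x0 sigma q) (prefix pi k))
  (fun q => index (nth x0 sigma q) pi).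
rewrite !big_mkord; apply.
- by move=> k; apply: ltW.
- by move=> k; apply: ltW.
- by move=> k q; apply: marg_ge0.
- by move=> q; rewrite subr_ge0.
- by move=> q; rewrite subr_ge0.
- by rewrite /prefix take_oversize ?ssg // setsg subrr.
- by move=> k k' hk; have := humon _ _ (prefix_sub pi hk); rewrite /U; lra.
- move=> k L hk hL hLk.
  have hs := sub_sum (prefix pi k) (take L sigma) humon husub.
  have hm : u (prefix sigma L) <= u (prefix pi k :|: [set x in take L sigma]).
    by apply: humon; apply: subsetUr.
  have he : \sum_(x <- take L sigma) marg u x (prefix pi k) =
     \sum_(0 <= q < L) marg u (nth x0 sigma q) (prefix pi k).
    rewrite (big_nth x0) size_takel ?ssg //.
    by apply: eq_big_nat => q /andP [_ hq]; rewrite nth_take.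
  rewrite he in hs; move: hLk; rewrite /U; lra.
- by move=> q _; rewrite -[X in (_ < X)%N]spi index_mem.
- move=> q k _ hk; apply: marg_in.
  by rewrite inE in_take.
- move=> q j hq hj.
  set e := nth x0 sigma q; set i := index e pi.
  have hi : (i < n)%N by rewrite -spi index_mem.
  have hei : nth x0 pi i = e by apply: nth_index.
  have hl := local_ineq x0 hpi hloc hi hj.
  rewrite -hei big_nat_recr //=.
  have -> : \sum_(j <= k < i) c (nth x0 pi k) * marg u (nth x0 pi i) (prefix pi k) =
     \sum_(k < i - j) c (nth x0 pi (j + k)) * marg u (nth x0 pi i) (prefix pi (j + k)).
    rewrite -{1}(add0n j) big_addn big_mkord; apply: eq_bigr => k _.
    by rewrite addnC.
  have hPi : prefix pi i.+1 = nth x0 pi i |: prefix pi i.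
    have hi' : (i < size pi)%N by rewrite spi.
    rewrite /prefix (take_nth x0 hi') -cats1 set_cat setUC.
    by apply/setP => y; rewrite !inE.
  have hce : 0 <= c (nth x0 pi i) by apply: ltW.
  have h2 : c (nth x0 pi i) * u (prefix pi i.+1) <= c (nth x0 pi i) * U.
    by apply: ler_wpM2l.
  rewrite /marg -hPi.
  move: hl h2; rewrite /U /marg; nra.
Qed.
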